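(* Let $k_0\in\mathbb{R}\setminus\{0\}$ and let $z\in C^2([-1,1])$ be a complex-valued function with $z(x)\neq 0$ for all $x\in[-1,1]$ and satisfying the boundary conditions $$z'(1)-ik_0 z(1)=0,\qquad z'(-1)+ik_0 z(-1)=0 .$$ Define the complex potential $U:\mathbb{R}\to\mathbb{C}$ by $$U(x)=\frac{z''(x)+k_0^2 z(x)}{z(x)}\quad (|x|<1),\qquad U(x)=0\quad (|x|\ge 1).$$ Then the function $$\psi(x)=\begin{cases} z(x), & |x|\le 1,\\ z(\pm 1)\,e^{ik_0(|x|-1)}, & \pm x\ge 1,\end{cases}$$ is a nontrivial $C^1(\mathbb{R})$ solution of $-\psi''+U(x)\psi=k_0^2\psi$ on $|x|<1$ with $\psi(x)=\alpha_\pm e^{ik_0|x|}$ for $\pm x\ge 1$ (for constants $\alpha_\pm\in\mathbb{C}$). Consequently $M_{22}(k_0)=0$, i.e. $U$ has a spectral singularity at $k=k_0$.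
   Context: For a potential $U$ vanishing outside $[-1,1]$ and $k\in\mathbb{R}\setminus\{0\}$, consider solutions $\psi$ of $-\psi''+U(x)\psi=k^2\psi$ on $|x|<1$ (continuous with continuous derivative on $\mathbb{R}$) of the form $\psi=a_\pm e^{ikx}+b_\pm e^{-ikx}$ for $\pm x\ge 1$. The transfer matrix $M(k)=(M_{ij}(k))_{i,j=1,2}$ is the $2\times 2$ matrix defined by $(a_+,b_+)^T=M(k)(a_-,b_-)^T$. A real $k_0\neq 0$ with $M_{22}(k_0)=0$ is called a spectral singularity (it corresponds to lasing if $k_0>0$ and to coherent perfect absorption if $k_0<0$); equivalently, the problem $-\psi''+U\psi=k_0^2\psi$ on $|x|<1$, $\psi=\alpha_\pm e^{ik_0|x|}$ for $\pm x\ge 1$, has a nontrivial solution. *)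

(* Defs.v *)
From Stdlib Require Import Reals.
From Coquelicot Require Import Coquelicot.
Open Scope R_scope.

(* Complex numbers (Coquelicot) ; [Complex.C] to avoid the clash with binomials. *)
Notation CC := Complex.C.

Definition eix (t : R) : CC := (cos t, sin t).

Definition I11 (x : R) : Prop := -1 <= x <= 1.

Definition deriv_on_I11 (f f' : R -> CC) : Prop :=
  forall x, I11 x ->
    filterlim (fun y => Cdiv (Cminus (f y) (f x)) (RtoC (y - x)))
      (within (fun y => I11 y /\ y <> x) (locally x)) (locally (f' x)).

Definition C2_on_I11 (z z1 z2 : R -> CC) : Prop :=
  deriv_on_I11 z z1 /\ deriv_on_I11 z1 z2 /\
  (forall x, I11 x -> filterlim z2 (within I11 (locally x)) (locally (z2 x))).

Definition potU (k0 : R) (z z2 : R -> CC) (x : R) : CC :=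
  if Rlt_dec (Rabs x) 1 then Cdiv (Cplus (z2 x) (Cmult (RtoC (k0 ^ 2)) (z x))) (z x)
  else RtoC 0.

Definition psi_ext (k0 : R) (z : R -> CC) (x : R) : CC :=
  if Rle_dec (Rabs x) 1 then z x
  else if Rle_dec 0 x then Cmult (z 1) (eix (k0 * (Rabs x - 1)))
  else Cmult (z (-1)) (eix (k0 * (Rabs x - 1))).

Definition C1_ode_sol (U : R -> CC) (k : R) (psi : R -> CC) : Prop :=
  exists psi' : R -> CC,
    (forall x, is_derive psi x (psi' x)) /\
    (forall x, continuous psi' x) /\
    (forall x, Rabs x < 1 ->
       exists psi'' : CC, is_derive psi' x psi'' /\
         Cplus (Copp psi'') (Cmult (U x) (psi x)) = Cmult (RtoC (k ^ 2)) (psi x)).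

Definition scat_sol (U : R -> CC) (k : R) (psi : R -> CC) (am bm ap bp : CC) : Prop :=
  C1_ode_sol U k psi /\
  (forall x, 1 <= x -> psi x = Cplus (Cmult ap (eix (k * x))) (Cmult bp (eix (- (k * x))))) /\
  (forall x, x <= -1 -> psi x = Cplus (Cmult am (eix (k * x))) (Cmult bm (eix (- (k * x))))).

Record mat2 := Mat2 { M11 : CC; M12 : CC; M21 : CC; M22 : CC }.

Definition is_transfer_matrix (U : R -> CC) (k : R) (M : mat2) : Prop :=
  (forall psi am bm ap bp, scat_sol U k psi am bm ap bp ->
     ap = Cplus (Cmult (M11 M) am) (Cmult (M12 M) bm) /\
     bp = Cplus (Cmult (M21 M) am) (Cmult (M22 M) bm)) /\
  (forall am bm, exists psi ap bp, scat_sol U k psi am bm ap bp).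

(* Main.v *)
Require Import Defs.
From Stdlib Require Import Reals Lra.
From Coquelicot Require Import Coquelicot.
Open Scope R_scope.

Definition RD (g:R->R) x l (S:R->Prop) := forall eps, 0<eps -> exists delta, 0<delta /\
  forall y, S y -> y<>x -> Rabs (y-x) < delta -> Rabs ((g y - g x)/(y-x) - l) < eps.
Definition RC (g:R->R) x (S:R->Prop) := forall eps, 0<eps -> exists delta, 0<delta /\
  forall y, S y -> Rabs (y-x) < delta -> Rabs (g y - g x) < eps.

Lemma RD_union g x l S1 S2 : RD g x l S1 -> RD g x l S2 -> RD g x l (fun y => S1 y \/ S2 y).
Proof.
  intros H1 H2 eps He. destruct (H1 eps He) as [d1 [Hd1 P1]]. destruct (H2 eps He) as [d2 [Hd2 P2]].
  exists (Rmin d1 d2). split. apply Rmin_pos; auto.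
  intros y [Hy|Hy] Hyx Hd. apply P1; auto. apply Rlt_le_trans with (1:=Hd); apply Rmin_l.
  apply P2; auto. apply Rlt_le_trans with (1:=Hd); apply Rmin_r.
Qed.

Lemma RC_union g x S1 S2 : RC g x S1 -> RC g x S2 -> RC g x (fun y => S1 y \/ S2 y).
Proof.
  intros H1 H2 eps He. destruct (H1 eps He) as [d1 [Hd1 P1]]. destruct (H2 eps He) as [d2 [Hd2 P2]].
  exists (Rmin d1 d2). split. apply Rmin_pos; auto.
  intros y [Hy|Hy] Hd. apply P1; auto. apply Rlt_le_trans with (1:=Hd); apply Rmin_l.
  apply P2; auto. apply Rlt_le_trans with (1:=Hd); apply Rmin_r.
Qed.

Lemma RD_ext g h x l S : (forall y, S y -> g y = h y) -> g x = h x -> RD g x l S -> RD h x l S.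
Proof.
  intros E Ex H eps He. destruct (H eps He) as [d [Hd P]]. exists d; split; auto.
  intros y Sy Hyx Hy. rewrite <- E, <- Ex by auto. auto.
Qed.

Lemma RC_ext g h x S : (forall y, S y -> g y = h y) -> g x = h x -> RC g x S -> RC h x S.
Proof.
  intros E Ex H eps He. destruct (H eps He) as [d [Hd P]]. exists d; split; auto.
  intros y Sy Hy. rewrite <- E, <- Ex by auto. auto.
Qed.

Lemma RD_full g x l S r : 0 < r -> (forall y, Rabs (y-x) < r -> S y) -> RD g x l S -> derivable_pt_lim g x l.
Proof.
  intros Hr HS H eps He. destruct (H eps He) as [d [Hd P]].
  assert (Hm : 0 < Rmin d r) by (apply Rmin_pos; auto).
  exists (mkposreal _ Hm). intros h Hh Hhd. simpl in Hhd.
  assert (E: x + h - x = h) by ring.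
  specialize (P (x+h)). rewrite E in P. apply P.
  apply HS. rewrite E. apply Rlt_le_trans with (1:=Hhd); apply Rmin_r.
  intro C. apply Hh. lra.
  apply Rlt_le_trans with (1:=Hhd); apply Rmin_l.
Qed.

Lemma RC_full g x S r : 0 < r -> (forall y, Rabs (y-x) < r -> S y) -> RC g x S -> continuity_pt g x.
Proof.
  intros Hr HS H eps He. destruct (H eps He) as [d [Hd P]].
  exists (Rmin d r). split. apply Rmin_pos; auto.
  intros y [_ Hy]. unfold R_dist in *. apply P.
  apply HS. apply Rlt_le_trans with (1:=Hy); apply Rmin_r.
  apply Rlt_le_trans with (1:=Hy); apply Rmin_l.
Qed.

Lemma pt_lim_RD g x l S : derivable_pt_lim g x l -> RD g x l S.
Proof.
  intros H eps He. destruct (H eps He) as [d P]. exists d; split. apply cond_pos.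
  intros y _ Hyx Hy. specialize (P (y - x)).
  replace (x + (y-x)) with y in P by ring. apply P; auto. intro C; apply Hyx; lra.
Qed.

Lemma cont_RC g x S : continuity_pt g x -> RC g x S.
Proof.
  intros H eps He. destruct (H eps He) as [d [Hd P]]. exists d; split; auto.
  intros y _ Hy. destruct (Req_dec y x) as [->|Hne].
  rewrite Rminus_eq_0, Rabs_R0; auto.
  apply (P y). split. split; auto. exact I. auto.
Qed.

Lemma RD_RC g x l S : RD g x l S -> RC g x S.
Proof.
  intros H eps He. destruct (H 1 Rlt_0_1) as [d [Hd P]].
  assert (Hl : 0 < Rabs l + 1) by (pose proof (Rabs_pos l); lra).
  assert (Hq : 0 < eps / (Rabs l + 1)) by (apply Rdiv_lt_0_compat; auto).
  exists (Rmin d (eps / (Rabs l + 1))). split. apply Rmin_pos; auto.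
  intros y Sy Hy. destruct (Req_dec y x) as [->|Hne].
  rewrite Rminus_eq_0, Rabs_R0; auto.
  assert (Hy1 : Rabs (y - x) < d) by (apply Rlt_le_trans with (1:=Hy); apply Rmin_l).
  assert (Hy2 : Rabs (y - x) < eps / (Rabs l + 1)) by (apply Rlt_le_trans with (1:=Hy); apply Rmin_r).
  specialize (P y Sy Hne Hy1).
  assert (Hyx : y - x <> 0) by lra.
  replace (g y - g x) with ((g y - g x) / (y - x) * (y - x)) by (field; auto).
  rewrite Rabs_mult.
  assert (Hqa : Rabs ((g y - g x) / (y - x)) < Rabs l + 1).
  { pose proof (Rabs_triang ((g y - g x) / (y - x) - l) l).
    replace ((g y - g x) / (y - x) - l + l) with ((g y - g x) / (y - x)) in H0 by ring. lra. }
  apply Rle_lt_trans with ((Rabs l + 1) * Rabs (y-x)).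
  apply Rmult_le_compat_r. apply Rabs_pos. lra.
  apply Rlt_le_trans with ((Rabs l + 1) * (eps / (Rabs l + 1))).
  apply Rmult_lt_compat_l; auto. right; field; lra.
Qed.

Definition pw (d0 dA dB : R -> R) x := if Rle_dec (Rabs x) 1 then d0 x else if Rle_dec 0 x then dA x else dB x.

Ltac rabs := unfold Rabs in *; repeat match goal with |- context [Rcase_abs ?a] => destruct (Rcase_abs a) end;
  repeat match goal with H : context [Rcase_abs ?a] |- _ => destruct (Rcase_abs a) end.

Lemma glue_D (g g0 gA gB d0 dA dB : R -> R) :
 (forall y, I11 y -> g y = g0 y) -> (forall y, 1 <= y -> g y = gA y) -> (forall y, y <= -1 -> g y = gB y) ->
 (forall y, I11 y -> RD g0 y (d0 y) I11) -> (forall y, derivable_pt_lim gA y (dA y)) ->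
 (forall y, derivable_pt_lim gB y (dB y)) ->
 d0 1 = dA 1 -> d0 (-1) = dB (-1) ->
 forall x, derivable_pt_lim g x (pw d0 dA dB x).
Proof.
  intros E0 EA EB H0 HA HB e1 e2 x. unfold pw.
  assert (HI : forall y, I11 y -> RD g y (d0 y) I11).
  { intros y Hy. apply RD_ext with g0; [intros; symmetry; auto | symmetry; auto | auto]. }
  assert (HA' : forall y, RD g y (dA y) (fun t => 1 <= t) -> True) by auto.
  destruct (Rle_dec (Rabs x) 1) as [Hx|Hx].
  - destruct (Rtotal_order x 1) as [Hx1|[Hx1|Hx1]]; [destruct (Rtotal_order x (-1)) as [Hx2|[Hx2|Hx2]]|..].
    + exfalso; rabs; lra.
    + subst x. rewrite e2.
      apply RD_full with (S := fun y => I11 y \/ y <= -1) (r := 1). lra.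
      intros y Hy. unfold I11. rabs; lra.
      apply RD_union. rewrite <- e2. apply HI. unfold I11; lra.
      apply RD_ext with gB; [intros; symmetry; auto | symmetry; apply EB; lra | apply pt_lim_RD; auto].
    + apply RD_full with (S := I11) (r := Rmin (1 - x) (x + 1)).
      apply Rmin_pos; lra.
      intros y Hy. unfold I11. 
      assert (Rabs (y - x) < 1 - x) by (apply Rlt_le_trans with (1:=Hy); apply Rmin_l).
      assert (Rabs (y - x) < x + 1) by (apply Rlt_le_trans with (1:=Hy); apply Rmin_r).
      rabs; lra.
      apply HI. unfold I11; lra.
    + subst x. rewrite e1.
      apply RD_full with (S := fun y => I11 y \/ 1 <= y) (r := 1). lra.
      intros y Hy. unfold I11. rabs; lra.
      apply RD_union. rewrite <- e1. apply HI. unfold I11; lra.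
      apply RD_ext with gA; [intros; symmetry; auto | symmetry; apply EA; lra | apply pt_lim_RD; auto].
    + exfalso; rabs; lra.
  - destruct (Rle_dec 0 x) as [Hp|Hp].
    + apply RD_full with (S := fun y => 1 <= y) (r := x - 1).
      rabs; lra. intros y Hy. rabs; lra.
      apply RD_ext with gA; [intros; symmetry; auto | symmetry; apply EA; rabs; lra | apply pt_lim_RD; auto].
    + apply RD_full with (S := fun y => y <= -1) (r := -x - 1).
      rabs; lra. intros y Hy. rabs; lra.
      apply RD_ext with gB; [intros; symmetry; auto | symmetry; apply EB; rabs; lra | apply pt_lim_RD; auto].
Qed.

Lemma glue_C (g g0 gA gB : R -> R) :
 (forall y, I11 y -> g y = g0 y) -> (forall y, 1 <= y -> g y = gA y) -> (forall y, y <= -1 -> g y = gB y) ->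
 (forall y, I11 y -> RC g0 y I11) -> (forall y, continuity_pt gA y) ->
 (forall y, continuity_pt gB y) ->
 forall x, continuity_pt g x.
Proof.
  intros E0 EA EB H0 HA HB x.
  assert (HI : forall y, I11 y -> RC g y I11).
  { intros y Hy. apply RC_ext with g0; [intros; symmetry; auto | symmetry; auto | auto]. }
  assert (HA2 : forall y, 1 <= y -> RC g y (fun t => 1 <= t)).
  { intros y Hy. apply RC_ext with gA; [intros; symmetry; auto | symmetry; auto | apply cont_RC; auto]. }
  assert (HB2 : forall y, y <= -1 -> RC g y (fun t => t <= -1)).
  { intros y Hy. apply RC_ext with gB; [intros; symmetry; auto | symmetry; auto | apply cont_RC; auto]. }
  destruct (Rtotal_order x 1) as [Hx1|[Hx1|Hx1]]; [destruct (Rtotal_order x (-1)) as [Hx2|[Hx2|Hx2]]|..].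
    + apply RC_full with (S := fun y => y <= -1) (r := -x - 1). lra. intros y Hy. rabs; lra.
      apply HB2; lra.
    + subst x.
      apply RC_full with (S := fun y => I11 y \/ y <= -1) (r := 1). lra.
      intros y Hy. unfold I11. rabs; lra.
      apply RC_union. apply HI. unfold I11; lra. apply HB2; lra.
    + apply RC_full with (S := I11) (r := Rmin (1 - x) (x + 1)).
      apply Rmin_pos; lra.
      intros y Hy. unfold I11. 
      assert (Rabs (y - x) < 1 - x) by (apply Rlt_le_trans with (1:=Hy); apply Rmin_l).
      assert (Rabs (y - x) < x + 1) by (apply Rlt_le_trans with (1:=Hy); apply Rmin_r).
      rabs; lra.
      apply HI. unfold I11; lra.
    + subst x.
      apply RC_full with (S := fun y => I11 y \/ 1 <= y) (r := 1). lra.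
      intros y Hy. unfold I11. rabs; lra.
      apply RC_union. apply HI. unfold I11; lra. apply HA2; lra.
    + apply RC_full with (S := fun y => 1 <= y) (r := x - 1). lra. intros y Hy. rabs; lra.
      apply HA2; lra.
Qed.
Lemma Cdiv_fst a b r : r <> 0 -> fst (Cdiv (Cminus a b) (RtoC r)) = (fst a - fst b)/r.
Proof. intros. destruct a, b. unfold Cdiv, Cminus, Cinv, Cmult, Cplus, Copp, RtoC; simpl. field; auto. Qed.
Lemma Cdiv_snd a b r : r <> 0 -> snd (Cdiv (Cminus a b) (RtoC r)) = (snd a - snd b)/r.
Proof. intros. destruct a, b. unfold Cdiv, Cminus, Cinv, Cmult, Cplus, Copp, RtoC; simpl. field; auto. Qed.

Lemma dI11_RD (f f' : R -> CC) : deriv_on_I11 f f' -> forall x, I11 x ->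
  RD (fun y => fst (f y)) x (fst (f' x)) I11 /\ RD (fun y => snd (f y)) x (snd (f' x)) I11.
Proof.
  intros H x Hx. specialize (H x Hx).
  split; intros eps He;
  destruct (H (ball (f' x) eps)) as [d Hd];
  try (apply (locally_ball (f' x) (mkposreal _ He)));
  exists d; split; try apply cond_pos; intros y Sy Hyx Hy;
  (destruct (Hd y) as [H1 H2]; [exact Hy | split; auto | ]).
  - change (Rabs (fst (Cdiv (Cminus (f y) (f x)) (RtoC (y - x))) - fst (f' x)) < eps) in H1.
    rewrite Cdiv_fst in H1 by lra. exact H1.
  - change (Rabs (snd (Cdiv (Cminus (f y) (f x)) (RtoC (y - x))) - snd (f' x)) < eps) in H2.
    rewrite Cdiv_snd in H2 by lra. exact H2.
Qed.

Lemma is_derive_C (f : R -> CC) x (l : CC) :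
  is_derive (fun y => fst (f y)) x (fst l) -> is_derive (fun y => snd (f y)) x (snd l) ->
  is_derive f x l.
Proof.
  intros H1 H2. split. apply is_linear_scal_l.
  intros x0 Hx0. apply (@is_filter_lim_locally_unique R_AbsRing R_NormedModule) in Hx0. subst x0.
  intros eps.
  destruct H1 as [_ H1]. destruct H2 as [_ H2].
  assert (He2 : 0 < eps/2) by (generalize (cond_pos eps); lra).
  specialize (H1 x (fun P HP => HP) (mkposreal _ He2)).
  specialize (H2 x (fun P HP => HP) (mkposreal _ He2)).
  generalize (filter_and _ _ H1 H2). apply filter_imp. simpl. intros y [A B].
  set (u := minus (minus (fst (f y)) (fst (f x))) (scal (minus y x) (fst l))) in *.
  set (v := minus (minus (snd (f y)) (snd (f x))) (scal (minus y x) (snd l))) in *.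
  assert (E : minus (minus (f y) (f x)) (scal (minus y x) l) = (u, v)) by reflexivity.
  change (sqrt (norm u ^ 2 + norm v ^ 2) <= eps * norm (minus y x)).
  apply Rle_trans with (norm u + norm v).
  - assert (0 <= norm u) by apply norm_ge_0. assert (0 <= norm v) by apply norm_ge_0.
    rewrite <- (sqrt_pow2 (norm u + norm v)) by lra.
    apply sqrt_le_1_alt. nra.
  - change (norm u <= eps/2 * norm (minus y x)) in A. change (norm v <= eps/2 * norm (minus y x)) in B. lra.
Qed.

Lemma continuous_C (f : R -> CC) x :
  (forall eps, 0 < eps -> exists d, 0 < d /\ forall y, Rabs (y - x) < d ->
     Rabs (fst (f y) - fst (f x)) < eps /\ Rabs (snd (f y) - snd (f x)) < eps) ->
  continuous f x.
Proof.
  intros H P [eps HP]. destruct (H eps (cond_pos eps)) as [d [Hd Q]].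
  exists (mkposreal _ Hd). intros y Hy. apply HP.
  destruct (Q y Hy) as [A B]. split; [exact A | exact B].
Qed.
Definition Eg (c : CC) (k m y : R) : CC := Cmult c (eix (k*y+m)).
Lemma Eg_der c k m y : derivable_pt_lim (fun y => fst (Eg c k m y)) y (fst (Cmult (Cmult Ci (RtoC k)) (Eg c k m y)))
  /\ derivable_pt_lim (fun y => snd (Eg c k m y)) y (snd (Cmult (Cmult Ci (RtoC k)) (Eg c k m y))).
Proof. destruct c as [a b]. split; apply is_derive_Reals; unfold Eg, eix, Cmult, Ci, RtoC; simpl; auto_derive; auto; ring. Qed.
Lemma eix_add a b : eix (a+b) = Cmult (eix a) (eix b).
Proof. unfold eix, Cmult; simpl. rewrite cos_plus, sin_plus. f_equal; ring. Qed.
Lemma eix0 : eix 0 = RtoC 1.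
Proof. unfold eix. rewrite cos_0, sin_0. reflexivity. Qed.
Lemma bc1 a c k : Cminus a (Cmult (Cmult Ci (RtoC k)) c) = RtoC 0 -> a = Cmult (Cmult Ci (RtoC k)) c.
Proof. destruct a, c. unfold Cminus, Cplus, Copp, Cmult, Ci, RtoC; simpl. intros H; injection H; intros; f_equal; nra. Qed.
Lemma bc2 a c k : Cplus a (Cmult (Cmult Ci (RtoC k)) c) = RtoC 0 -> a = Cmult (Cmult Ci (RtoC (-k))) c.
Proof. destruct a, c. unfold Cminus, Cplus, Copp, Cmult, Ci, RtoC; simpl. intros H; injection H; intros; f_equal; nra. Qed.

Lemma Eg'_cont c k m y : continuity_pt (fun t => fst (Cmult (Cmult Ci (RtoC k)) (Eg c k m t))) y /\
  continuity_pt (fun t => snd (Cmult (Cmult Ci (RtoC k)) (Eg c k m t))) y.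
Proof.
  split.
  - apply continuity_pt_locally_ext with (f := fun t => fst (Eg (Cmult (Cmult Ci (RtoC k)) c) k m t)) (a := 1).
    lra. intros t _. unfold Eg. rewrite Cmult_assoc. reflexivity.
    apply derivable_continuous_pt. eexists. apply Eg_der.
  - apply continuity_pt_locally_ext with (f := fun t => snd (Eg (Cmult (Cmult Ci (RtoC k)) c) k m t)) (a := 1).
    lra. intros t _. unfold Eg. rewrite Cmult_assoc. reflexivity.
    apply derivable_continuous_pt. eexists. apply Eg_der.
Qed.

Lemma fst_if (b : bool) (p q : CC) : True. Proof. exact I. Qed.

Theorem mainTheorem1 (k0 : R) (z z1 z2 : R -> CC)
  (hk0 : k0 <> 0)
  (hz : C2_on_I11 z z1 z2)
  (hnz : forall x, -1 <= x <= 1 -> z x <> RtoC 0)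
  (hbc1 : Cminus (z1 1) (Cmult (Cmult Ci (RtoC k0)) (z 1)) = RtoC 0)
  (hbc2 : Cplus (z1 (-1)) (Cmult (Cmult Ci (RtoC k0)) (z (-1))) = RtoC 0) :
  (exists x, psi_ext k0 z x <> RtoC 0) /\
  C1_ode_sol (potU k0 z z2) k0 (psi_ext k0 z) /\
  (exists ap am : CC,
     (forall x, 1 <= x -> psi_ext k0 z x = Cmult ap (eix (k0 * Rabs x))) /\
     (forall x, x <= -1 -> psi_ext k0 z x = Cmult am (eix (k0 * Rabs x)))) /\
  (forall M, is_transfer_matrix (potU k0 z z2) k0 M -> M22 M = RtoC 0).
Proof.
  destruct hz as [Dz [Dz1 _]].
  apply bc1 in hbc1. apply bc2 in hbc2.
  set (E1 := Eg (z 1) k0 (-k0)). set (E2 := Eg (z (-1)) (-k0) (-k0)).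
  assert (P0 : forall y, I11 y -> psi_ext k0 z y = z y).
  { intros y Hy. unfold psi_ext, I11 in *. destruct (Rle_dec (Rabs y) 1) as [h|h]; auto.
    exfalso; apply h; rabs; lra. }
  assert (PA : forall y, 1 <= y -> psi_ext k0 z y = E1 y).
  { intros y Hy. unfold psi_ext, E1, Eg. destruct (Rle_dec (Rabs y) 1) as [h|h].
    - assert (y = 1) by (rabs; lra). subst y.
      replace (k0 * 1 + - k0) with 0 by ring. rewrite eix0, Cmult_1_r. reflexivity.
    - destruct (Rle_dec 0 y) as [h2|h2]; [|exfalso; lra].
      f_equal. f_equal. rabs; lra. }
  assert (PB : forall y, y <= -1 -> psi_ext k0 z y = E2 y).
  { intros y Hy. unfold psi_ext, E2, Eg. destruct (Rle_dec (Rabs y) 1) as [h|h].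
    - assert (y = -1) by (rabs; lra). subst y.
      replace (- k0 * -1 + - k0) with 0 by ring. rewrite eix0, Cmult_1_r. reflexivity.
    - destruct (Rle_dec 0 y) as [h2|h2]; [exfalso; lra|].
      f_equal. f_equal. rabs; lra. }
  assert (E11 : E1 1 = z 1) by (rewrite <- PA, P0; unfold I11; auto; lra).
  assert (E21 : E2 (-1) = z (-1)) by (rewrite <- PB, P0; unfold I11; auto; lra).
  set (P' := fun x => if Rle_dec (Rabs x) 1 then z1 x else if Rle_dec 0 x
     then Cmult (Cmult Ci (RtoC k0)) (E1 x) else Cmult (Cmult Ci (RtoC (-k0))) (E2 x)).
  assert (Pf : forall x, fst (P' x) = pw (fun y => fst (z1 y)) (fun y => fst (Cmult (Cmult Ci (RtoC k0)) (E1 y)))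
     (fun y => fst (Cmult (Cmult Ci (RtoC (-k0))) (E2 y))) x).
  { intros x; unfold P', pw. destruct (Rle_dec (Rabs x) 1); [|destruct (Rle_dec 0 x)]; reflexivity. }
  assert (Ps : forall x, snd (P' x) = pw (fun y => snd (z1 y)) (fun y => snd (Cmult (Cmult Ci (RtoC k0)) (E1 y)))
     (fun y => snd (Cmult (Cmult Ci (RtoC (-k0))) (E2 y))) x).
  { intros x; unfold P', pw. destruct (Rle_dec (Rabs x) 1); [|destruct (Rle_dec 0 x)]; reflexivity. }
  assert (Q0 : forall y, I11 y -> P' y = z1 y).
  { intros y Hy. unfold P', I11 in *. destruct (Rle_dec (Rabs y) 1) as [h|h]; auto.
    exfalso; apply h; rabs; lra. }
  assert (QA : forall y, 1 <= y -> P' y = Cmult (Cmult Ci (RtoC k0)) (E1 y)).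
  { intros y Hy. unfold P'. destruct (Rle_dec (Rabs y) 1) as [h|h].
    - assert (y = 1) by (rabs; lra). subst y. rewrite E11. exact hbc1.
    - destruct (Rle_dec 0 y) as [h2|h2]; [reflexivity|exfalso; lra]. }
  assert (QB : forall y, y <= -1 -> P' y = Cmult (Cmult Ci (RtoC (-k0))) (E2 y)).
  { intros y Hy. unfold P'. destruct (Rle_dec (Rabs y) 1) as [h|h].
    - assert (y = -1) by (rabs; lra). subst y. rewrite E21. exact hbc2.
    - destruct (Rle_dec 0 y) as [h2|h2]; [exfalso; lra|reflexivity]. }
  assert (EgC : forall c k m y, Cmult (Cmult Ci (RtoC k)) (Eg c k m y) = Eg (Cmult (Cmult Ci (RtoC k)) c) k m y).
  { intros. unfold Eg. apply Cmult_assoc. }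
  assert (ODE : C1_ode_sol (potU k0 z z2) k0 (psi_ext k0 z)).
  { exists P'. split; [|split].
    - intros x. apply is_derive_C; apply is_derive_Reals; [rewrite Pf; apply glue_D with (g0 := fun y => fst (z y)) (gA := fun y => fst (E1 y)) (gB := fun y => fst (E2 y))
       | rewrite Ps; apply glue_D with (g0 := fun y => snd (z y)) (gA := fun y => snd (E1 y)) (gB := fun y => snd (E2 y))].
      all: try (intros y Hy; rewrite ?P0, ?PA, ?PB by auto; reflexivity).
      all: try (intros y Hy; apply (dI11_RD _ _ Dz y Hy)).
      all: try (intros y; apply Eg_der).
      all: try (rewrite <- E11, <- hbc1 ; reflexivity).
      all: try (rewrite <- E21, <- hbc2 ; reflexivity).
      all: try (rewrite E11, <- hbc1 ; reflexivity).
      all: try (rewrite E21, <- hbc2 ; reflexivity).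
    - intros x. apply continuous_C.
      assert (C1 : continuity_pt (fun y => fst (P' y)) x).
      { apply glue_C with (g0 := fun y => fst (z1 y)) (gA := fun y => fst (Cmult (Cmult Ci (RtoC k0)) (E1 y)))
          (gB := fun y => fst (Cmult (Cmult Ci (RtoC (-k0))) (E2 y))).
        all: try (intros y Hy; rewrite ?Q0, ?QA, ?QB by auto; reflexivity).
        intros y Hy. eapply RD_RC. apply (dI11_RD _ _ Dz1 y Hy).
        all: intros y; unfold E1, E2; apply Eg'_cont. }
      assert (C2 : continuity_pt (fun y => snd (P' y)) x).
      { apply glue_C with (g0 := fun y => snd (z1 y)) (gA := fun y => snd (Cmult (Cmult Ci (RtoC k0)) (E1 y)))
          (gB := fun y => snd (Cmult (Cmult Ci (RtoC (-k0))) (E2 y))).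
        all: try (intros y Hy; rewrite ?Q0, ?QA, ?QB by auto; reflexivity).
        intros y Hy. eapply RD_RC. apply (dI11_RD _ _ Dz1 y Hy).
        all: intros y; unfold E1, E2; apply Eg'_cont. }
      intros eps He.
      destruct (cont_RC _ _ (fun _ => True) C1 eps He) as [d1 [Hd1 R1]].
      destruct (cont_RC _ _ (fun _ => True) C2 eps He) as [d2 [Hd2 R2]].
      exists (Rmin d1 d2). split. apply Rmin_pos; auto.
      intros y Hy. split. apply R1; auto. apply Rlt_le_trans with (1:=Hy); apply Rmin_l.
      apply R2; auto. apply Rlt_le_trans with (1:=Hy); apply Rmin_r.
    - intros x Hx. exists (z2 x). split.
      + assert (HxI : I11 x) by (unfold I11; rabs; lra).
        destruct (dI11_RD _ _ Dz1 x HxI) as [A B].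
        apply is_derive_C; apply is_derive_Reals.
        * apply RD_full with (S := I11) (r := 1 - Rabs x). lra.
          intros y Hy. unfold I11. rabs; lra.
          apply RD_ext with (fun y => fst (z1 y)); [intros y Hy; rewrite Q0; auto | rewrite Q0; auto | auto].
        * apply RD_full with (S := I11) (r := 1 - Rabs x). lra.
          intros y Hy. unfold I11. rabs; lra.
          apply RD_ext with (fun y => snd (z1 y)); [intros y Hy; rewrite Q0; auto | rewrite Q0; auto | auto].
      + unfold potU. destruct (Rlt_dec (Rabs x) 1) as [_|h]; [|lra].
        assert (HxI : I11 x) by (unfold I11; rabs; lra).
        rewrite P0 by auto. field. apply hnz. exact HxI. }
  assert (Hap : forall x, 1 <= x -> psi_ext k0 z x = Cmult (Cmult (z 1) (eix (-k0))) (eix (k0 * Rabs x))).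
  { intros x Hx. rewrite PA by auto. unfold E1, Eg. rewrite <- Cmult_assoc, <- eix_add.
    f_equal. f_equal. rabs; lra. }
  assert (Ham : forall x, x <= -1 -> psi_ext k0 z x = Cmult (Cmult (z (-1)) (eix (-k0))) (eix (k0 * Rabs x))).
  { intros x Hx. rewrite PB by auto. unfold E2, Eg. rewrite <- Cmult_assoc, <- eix_add.
    f_equal. f_equal. rabs; lra. }
  split; [|split; [exact ODE|split]].
  - exists 0. rewrite P0 by (unfold I11; lra). apply hnz; lra.
  - eexists; eexists; split; [exact Hap | exact Ham].
  - intros M [HM _].
    set (bm := Cmult (z (-1)) (eix (-k0))).
    destruct (HM (psi_ext k0 z) (RtoC 0) bm (Cmult (z 1) (eix (-k0))) (RtoC 0)) as [_ H].
    + split; [exact ODE | split].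
      * intros x Hx. rewrite Hap by auto. replace (Rabs x) with x by (rabs; lra).
        rewrite Cmult_0_l, Cplus_0_r. reflexivity.
      * intros x Hx. rewrite Ham by auto. replace (k0 * Rabs x) with (- (k0 * x)) by (rabs; lra).
        rewrite Cmult_0_l, Cplus_0_l. reflexivity.
    + rewrite Cmult_0_r, Cplus_0_l in H.
      assert (Hb : Cmult bm (eix k0) = z (-1)).
      { unfold bm. rewrite <- Cmult_assoc, <- eix_add. replace (-k0 + k0) with 0 by ring.
        rewrite eix0, Cmult_1_r. reflexivity. }
      assert (Hz : z (-1) <> RtoC 0) by (apply hnz; lra).
      replace (M22 M) with (Cdiv (Cmult (Cmult (M22 M) bm) (eix k0)) (z (-1))).
      * rewrite <- H. unfold Cdiv. rewrite !Cmult_0_l. reflexivity.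
      * rewrite <- Cmult_assoc, Hb. field. exact Hz.
Qed.
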